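(* Let $(A,m)$ be a strict $A_\infty$-algebra over a field $\mathbf{F}$, let $\lambda\in\mathbf{F}$ with $\lambda\neq0$ and $a,b\in\mathbf{Z}$, and let $\tilde m_k=\lambda^{ak+b}m_k$ for $k\ge1$. Then there is an $A_\infty$ quasi-isomorphism $(A,\tilde m)\to(A,m)$.
   Context: A strict $A_\infty$-algebra $(A,m)$ over $\mathbf{F}$ is a $\mathbf{Z}$-graded vector space $A=\bigoplus_kA^k$ with graded linear maps $m_n:A^{\otimes n}\to A$ ($n\ge1$) of degree $2-n$ satisfying $\sum_{n=r+s+t}(-1)^{rs+t}m_{r+1+t}(\mathbf{I}^{\otimes r}\otimes m_s\otimes\mathbf{I}^{\otimes t})=0$ for all $n\ge1$ ($r,t\ge0,s\ge1$), with the Koszul sign rule $(f\otimes g)(x\otimes y)=(-1)^{|g||x|}f(x)\otimes g(y)$; $(A,\tilde m)$ is again such an algebra. A homomorphism $f:(A,m^A)\to(B,m^B)$ of strict $A_\infty$-algebras is a family of graded maps $f_n:A^{\otimes n}\to B$ ($n\ge1$) of degree $1-n$ with $\sum_{n=r+s+t}(-1)^{rs+t}f_{r+1+t}(\mathbf{I}^{\otimes r}\otimes m^A_s\otimes\mathbf{I}^{\otimes t})=\sum_{n=i_1+\dots+i_k}(-1)^{\sigma}m^B_k(f_{i_k}\otimes\cdots\otimes f_{i_1})$, where $\sigma=(k-1)(i_1-1)+(k-2)(i_2-1)+\dots+2(i_{k-2}-1)+(i_{k-1}-1)$. It is a quasi-isomorphism if $f_1$ induces an isomorphism $H^*(A,m^A_1)\to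 H^*(B,m^B_1)$. *)

(* Defs.v *)
From HB Require Import structures.
From mathcomp Require Import all_boot all_order all_algebra.
Set Implicit Arguments. Unset Strict Implicit. Unset Printing Implicit Defensive.
Import Order.TTheory GRing.Theory Num.Theory.
Local Open Scope ring_scope.

(* A Z-graded F-vector space A = (+)_k A^k is modelled by an F-vector space
   V (lmodType F) together with a predicate [hom k x] meaning "x lies in A^k";
   [graded hom] says the A^k are subspaces and V is their (internal) direct sum.
   A graded linear map A^{(x)n} -> A of degree d is modelled, via the universal
   property of the tensor product, by an n-multilinear map on lists of length n
   sending homogeneous x_1,...,x_n of degrees k_1..k_n into A^{k_1+..+k_n+d}.
   A family (g_n)_{n>=1} is a function [g : nat -> seq V -> V], where only the
   values [g n xs] with [size xs = n] and [n >= 1] are meaningful.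
   Identities between maps on A^{(x)n} are checked on pure tensors
   x_1 (x) ... (x) x_n of homogeneous elements (which suffices by linearity),
   with the Koszul sign rule made explicit. *)

Section Ainf.
Variables (F : fieldType) (V : lmodType F).

Definition homs (hom : int -> V -> Prop) (ks : seq int) (xs : seq V) : Prop :=
  size ks = size xs /\ forall i, (i < size xs)%N -> hom (nth 0 ks i) (nth 0 xs i).

Definition graded (hom : int -> V -> Prop) : Prop :=
  [/\ (forall k, hom k 0),
      (forall k (c : F) x y, hom k x -> hom k y -> hom k (c *: x + y)),
      (forall v : V, exists (ks : seq int) (xs : seq V),
          [/\ uniq ks, homs hom ks xs & v = \sum_(x <- xs) x])
    & (forall (ks : seq int) (xs : seq V), uniq ks -> homs hom ks xs ->
          \sum_(x <- xs) x = 0 -> forall i, nth 0 xs i = 0)].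

Definition degsum (ks : seq int) : int := \sum_(k <- ks) k.

Definition multilinear (g : nat -> seq V -> V) : Prop :=
  forall (xs ys : seq V) (c : F) (u v : V),
    g (size xs + size ys).+1 (xs ++ (c *: u + v) :: ys) =
    c *: g (size xs + size ys).+1 (xs ++ u :: ys)
    + g (size xs + size ys).+1 (xs ++ v :: ys).

Definition graded_family (hom : int -> V -> Prop) (d : nat -> int)
    (g : nat -> seq V -> V) : Prop :=
  forall (n : nat) (ks : seq int) (xs : seq V), (0 < n)%N -> size xs = n ->
    homs hom ks xs -> hom (degsum ks + d n) (g n xs).

(* sum_{n=r+s+t, s>=1} (-1)^{rs+t} outer_{r+1+t}(I^{(x)r} (x) inner_s (x) I^{(x)t})
   applied to x_1 (x) ... (x) x_n, where inner_s has degree 2-s; the Koszul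
   sign (-1)^{(2-s)(k_1+...+k_r)} comes from inner_s passing x_1..x_r. *)
Definition rst_sum (outer inner : nat -> seq V -> V) (n : nat)
    (ks : seq int) (xs : seq V) : V :=
  \sum_(r < n) \sum_(j < n - r)
    let s := j.+1 in let t := (n - r - s)%N in
    (-1) ^ (((r * s + t)%N)%:Z + (2 - s%:Z) * degsum (take r ks)) *:
      outer (r + 1 + t)%N
        (take r xs ++ inner s (take s (drop r xs)) :: drop (r + s) xs).

Definition Ainf_algebra (hom : int -> V -> Prop) (m : nat -> seq V -> V) : Prop :=
  [/\ multilinear m, graded_family hom (fun n => 2 - n%:Z) m
    & forall (n : nat) (ks : seq int) (xs : seq V), (0 < n)%N -> size xs = n ->
        homs hom ks xs -> rst_sum m m n ks xs = 0].

Fixpoint comps_fuel (fuel n : nat) : seq (seq nat) :=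
  match fuel with
  | 0 => if n == 0%N then [:: [::]] else [::]
  | fuel'.+1 =>
      if n == 0%N then [:: [::]] else
      flatten [seq [seq i.+1 :: c | c <- comps_fuel fuel' (n - i.+1)]
              | i <- iota 0 n]
  end.
Definition compositions (n : nat) : seq (seq nat) := comps_fuel n n.

Definition sigma_sign (ii : seq nat) : int :=
  \sum_(j < size ii) ((size ii - 1 - j)%N)%:Z * ((nth 0%N ii j)%:Z - 1).

Fixpoint tens_apply (g : nat -> seq V -> V) (bl : seq nat) (xs : seq V) : seq V :=
  match bl with
  | [::] => [::]
  | b :: bl' => g b (take b xs) :: tens_apply g bl' (drop b xs)
  end.

(* Koszul exponent for g_{b_1} (x) g_{b_2} (x) ... with deg g_b = 1 - b:
   each g_b passes all inputs to the left of its block. *)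
Fixpoint koszul_exp (bl : seq nat) (ks : seq int) (pre : int) : int :=
  match bl with
  | [::] => 0
  | b :: bl' => (1 - b%:Z) * pre
                + koszul_exp bl' (drop b ks) (pre + degsum (take b ks))
  end.

(* homomorphism (A, mA) -> (A, mB) of strict A_infinity-algebras; the right
   hand side is sum_{n = i_1+...+i_k} (-1)^sigma mB_k(f_{i_k} (x) ... (x) f_{i_1}),
   so the leftmost block is f_{i_k}: block list (left to right) = rev ii. *)
Definition Ainf_hom (hom : int -> V -> Prop) (mA mB f : nat -> seq V -> V) : Prop :=
  [/\ multilinear f, graded_family hom (fun n => 1 - n%:Z) f
    & forall (n : nat) (ks : seq int) (xs : seq V), (0 < n)%N -> size xs = n ->
        homs hom ks xs ->
        rst_sum f mA n ks xs =
        \sum_(ii <- compositions n)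
          (-1) ^ (sigma_sign ii + koszul_exp (rev ii) ks 0) *:
            mB (size ii) (tens_apply f (rev ii) xs)].

(* f_1 induces an isomorphism H(A, mA_1) -> H(A, mB_1) (injective and
   surjective on cohomology classes) *)
Definition quasi_iso_on_H (mA mB f : nat -> seq V -> V) : Prop :=
  let dA := fun x => mA 1%N [:: x] in
  let dB := fun x => mB 1%N [:: x] in
  let f1 := fun x => f 1%N [:: x] in
  (forall x, dA x = 0 -> (exists y, f1 x = dB y) -> exists z, x = dA z) /\
  (forall y, dB y = 0 -> exists x, dA x = 0 /\ exists z, y - f1 x = dB z).

Definition Ainf_quasi_iso (hom : int -> V -> Prop) (mA mB f : nat -> seq V -> V)
  : Prop := Ainf_hom hom mA mB f /\ quasi_iso_on_H mA mB f.

End Ainf.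

(* Main.v *)
Require Import Defs.
From HB Require Import structures.
From mathcomp Require Import all_boot all_order all_algebra.
From mathcomp Require Import ring.
From Stdlib Require Import ClassicalEpsilon.
Import Order.TTheory GRing.Theory Num.Theory.
Local Open Scope ring_scope.

Section TT.
Variables (F : fieldType) (V : lmodType F) (hom : int -> V -> Prop).
Hypothesis Hg : graded hom.

Lemma hom0 k : hom k 0. Proof. by case: Hg. Qed.
Lemma homZD k (c : F) (x y : V) : hom k x -> hom k y -> hom k (c *: x + y).
Proof. by case: Hg => _ H _ _; apply: H. Qed.

Lemma homD k x y : hom k x -> hom k y -> hom k (x + y).
Proof. by move=> hx hy; have := homZD k 1 x y hx hy; rewrite scale1r. Qed.
Lemma homZ k (c : F) (x : V) : hom k x -> hom k (c *: x).
Proof. by move=> hx; have := homZD k c x 0 hx (hom0 k); rewrite addr0. Qed.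
Lemma homN k x : hom k x -> hom k (- x).
Proof. by move=> hx; have := homZ k (-1) x hx; rewrite scaleN1r. Qed.

Definition isdec (v : V) (P : seq (int * V)) :=
  {in P, forall p, hom p.1 p.2} /\ v = \sum_(p <- P) p.2.
Definition comp (P : seq (int * V)) k := \sum_(p <- P | p.1 == k) p.2.
Definition wsum (g : int -> F) (P : seq (int * V)) := \sum_(p <- P) g p.1 *: p.2.

Lemma hom_comp P k : {in P, forall p, hom p.1 p.2} -> hom k (comp P k).
Proof.
rewrite /comp; elim: P => [|p P IH] HP; first by rewrite big_nil; apply: hom0.
have HP' : {in P, forall p, hom p.1 p.2} by move=> q hq; apply: HP; rewrite in_cons hq orbT.
rewrite big_cons; case: eqP => [Hk|_]; last exact: IH.
apply: homD; last exact: IH.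
rewrite -Hk; apply: HP; exact: mem_head.
Qed.

Lemma sum_pred1_const (K : seq int) k (c : V) : uniq K -> k \in K ->
  \sum_(j <- K | j == k) c = c.
Proof.
move=> uK kK; rewrite big_const_seq.
have -> : count (fun j => j == k) K = 1%N.
  by have := count_uniq_mem k uK; rewrite kK.
by rewrite /= addr0.
Qed.

Lemma wsum_comp g P (K : seq int) : uniq K -> {subset map fst P <= K} ->
  wsum g P = \sum_(k <- K) g k *: comp P k.
Proof.
move=> uK sK.
rewrite /comp; under eq_bigr => k _ do rewrite scaler_sumr big_mkcond.
rewrite exchange_big /wsum big_seq [RHS]big_seq; apply: eq_bigr => p pP.
rewrite -big_mkcond /=.
rewrite (eq_bigr (fun _ => g p.1 *: p.2)); last by move=> j /eqP ->.
rewrite (eq_bigl (fun j => j == p.1)); last by move=> j; rewrite eq_sym.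
symmetry; apply: sum_pred1_const => //; apply: sK; exact: map_f.
Qed.

Lemma sum_wsum1 P : \sum_(p <- P) p.2 = wsum (fun _ => 1) P.
Proof. by apply: eq_bigr => p _; rewrite scale1r. Qed.

Lemma dec_unique g v P Q : isdec v P -> isdec v Q -> wsum g P = wsum g Q.
Proof.
move=> [HP vP] [HQ vQ].
set K := undup (map fst P ++ map fst Q).
have uK : uniq K := undup_uniq _.
have sP : {subset map fst P <= K} by move=> k kP; rewrite mem_undup mem_cat kP.
have sQ : {subset map fst Q <= K} by move=> k kQ; rewrite mem_undup mem_cat kQ orbT.
have eP : \sum_(k <- K) comp P k = v.
  by rewrite vP sum_wsum1 (wsum_comp _ _ _ uK sP); apply: eq_bigr => k _; rewrite scale1r.
have eQ : \sum_(k <- K) comp Q k = v.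
  by rewrite vQ sum_wsum1 (wsum_comp _ _ _ uK sQ); apply: eq_bigr => k _; rewrite scale1r.
have Hz : forall k, k \in K -> comp P k = comp Q k.
  case: Hg => _ _ _ H4.
  pose z k := comp P k - comp Q k.
  have H := H4 K (map z K) uK.
  have hK : homs hom K (map z K).
    split; first by rewrite size_map.
    move=> i; rewrite size_map => iK; rewrite (nth_map 0) //.
    by apply: homD; [apply: hom_comp | apply: homN; apply: hom_comp].
  have s0 : \sum_(x <- map z K) x = 0.
    by rewrite big_map /z sumrB eP eQ subrr.
  move=> k kK; have := H hK s0 (index k K).
  rewrite (nth_map 0) ?index_mem // nth_index // /z => /eqP.
  by rewrite subr_eq0 => /eqP.
rewrite (wsum_comp g _ _ uK sP) (wsum_comp g _ _ uK sQ); apply: eq_big_seq => k kK.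
by rewrite Hz.
Qed.

Lemma dec_exists v : exists P, isdec v P.
Proof.
case: Hg => _ _ H3 _; have [ks [xs [_ [sz hx] ->]]] := H3 v.
exists (zip ks xs); split.
  move=> p /(nthP (0, 0)) [i]; rewrite size_zip sz minnn => ilt <-.
  by rewrite nth_zip //=; apply: hx.
rewrite -(big_map snd xpredT idfun) /=.
by rewrite (_ : [seq i.2 | i <- zip ks xs] = xs) // -[LHS]/(unzip2 _) unzip2_zip // sz.
Qed.

Definition T (g : int -> F) (v : V) : V :=
  wsum g (epsilon (inhabits [::]) (isdec v)).

Lemma T_spec g v P : isdec v P -> T g v = wsum g P.
Proof.
move=> dP; rewrite /T; apply: dec_unique dP.
by apply: epsilon_spec; apply: dec_exists.
Qed.

Lemma T_hom g k x : hom k x -> T g x = g k *: x.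
Proof.
move=> hx; rewrite (T_spec g _ ([:: (k, x)])); first by rewrite /wsum big_seq1.
split; last by rewrite big_seq1.
by move=> p; rewrite inE => /eqP ->.
Qed.

Lemma T_lin g c u w : T g (c *: u + w) = c *: T g u + T g w.
Proof.
have [Pu [Hu eu]] := dec_exists u; have [Pw [Hw ew]] := dec_exists w.
rewrite (T_spec g _ _ (conj Hu eu)) (T_spec g _ _ (conj Hw ew)).
rewrite (T_spec g _ (map (fun p => (p.1, c *: p.2)) Pu ++ Pw)).
  rewrite /wsum big_cat big_map /= scaler_sumr; congr (_ + _).
  by apply: eq_bigr => p _; rewrite !scalerA mulrC.
split.
  move=> p; rewrite mem_cat => /orP [/mapP [q qP ->] /=|]; last exact: Hw.
  by apply: homZ; apply: Hu.
by rewrite big_cat big_map /= eu ew scaler_sumr.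
Qed.

Lemma T_ext g g' v : g =1 g' -> T g v = T g' v.
Proof. by move=> e; rewrite /T /wsum; apply: eq_bigr => p _; rewrite e. Qed.

Lemma T_scal c g v : T (fun k => c * g k) v = c *: T g v.
Proof.
by rewrite /T /wsum scaler_sumr; apply: eq_bigr => p _; rewrite scalerA.
Qed.

Lemma T_comp g h v : T g (T h v) = T (fun k => g k * h k) v.
Proof.
have [P [HP eP]] := dec_exists v.
rewrite (T_spec h _ _ (conj HP eP)) (T_spec _ _ _ (conj HP eP)).
rewrite (T_spec g _ (map (fun p => (p.1, h p.1 *: p.2)) P)).
  by rewrite /wsum big_map; apply: eq_bigr => p _ /=; rewrite scalerA.
split; last by rewrite big_map.
by move=> p /mapP [q qP ->] /=; apply: homZ; apply: HP.
Qed.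

Lemma T_one v : T (fun _ => 1) v = v.
Proof.
have [P [HP eP]] := dec_exists v.
by rewrite (T_spec _ _ _ (conj HP eP)) -sum_wsum1 eP.
Qed.

Lemma T_0 g : T g 0 = 0.
Proof. have H := T_lin g 1 0 0; rewrite !scale1r addr0 in H. by apply: (addrI (T g 0)); rewrite addr0 -H. Qed.

Lemma T_D g (D : V -> V) :
  (forall c u w, D (c *: u + w) = c *: D u + D w) ->
  (forall k x, hom k x -> hom (k + 1) (D x)) ->
  forall v, T g (D v) = D (T (fun k => g (k + 1)) v).
Proof.
move=> Dl Dh v.
have D0 : D 0 = 0.
  have H := Dl 1 0 0; rewrite !scale1r addr0 in H. by apply: (addrI (D 0)); rewrite addr0 -H.
have DS : forall (Q : seq (int * V)) (G : int * V -> V),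
    D (\sum_(p <- Q) G p) = \sum_(p <- Q) D (G p).
  move=> Q G; elim: Q => [|q Q IH]; first by rewrite !big_nil.
  rewrite !big_cons -IH; have := Dl 1 (G q) (\sum_(p <- Q) G p); by rewrite !scale1r.
have [P [HP eP]] := dec_exists v.
rewrite (T_spec (fun k => g (k + 1)) _ _ (conj HP eP)).
rewrite (T_spec g _ (map (fun p => (p.1 + 1, D p.2)) P)).
  rewrite /wsum big_map DS; apply: eq_bigr => p _ /=.
  by have := Dl (g (p.1 + 1)) p.2 0; rewrite addr0 D0 addr0.
split; last by rewrite big_map eP DS.
by move=> p /mapP [q qP ->] /=; apply: Dh; apply: HP.
Qed.

End TT.

Section ML.
Variables (F : fieldType) (V : lmodType F) (hom : int -> V -> Prop).
Variable g : nat -> seq V -> V.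
Hypothesis Hml : multilinear g.

Lemma ml_zero pre post : g (size pre + size post).+1 (pre ++ 0 :: post) = 0.
Proof.
have H := Hml pre post 1 0 0; rewrite !scale1r addr0 in H.
by apply: (addrI (g (size pre + size post).+1 (pre ++ 0 :: post))); rewrite addr0 -H.
Qed.

Lemma ml_scale pre post c u :
  g (size pre + size post).+1 (pre ++ c *: u :: post) =
  c *: g (size pre + size post).+1 (pre ++ u :: post).
Proof. by have := Hml pre post c u 0; rewrite addr0 ml_zero addr0. Qed.

Lemma ml_zero_in ys : (0 : V) \in ys -> g (size ys) ys = 0.
Proof.
case/splitPr => pre post; rewrite size_cat /= addnS; exact: ml_zero.
Qed.

Lemma homs_cons k ks x xs : homs hom (k :: ks) (x :: xs) -> hom k x /\ homs hom ks xs.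
Proof.
case=> [/= [sz] H]; split; first exact: (H 0%N).
by split=> // i ilt; apply: (H i.+1).
Qed.

Lemma ml_key (f1 : V -> V) (mu nu : F) : nu != 0 ->
  (forall k x, hom k x -> f1 x = (mu * nu ^ k) *: x) ->
  forall xs ks pre, homs hom ks xs ->
  g (size pre + size xs) (pre ++ map f1 xs) =
  (mu ^+ size xs * nu ^ degsum ks) *: g (size pre + size xs) (pre ++ xs).
Proof.
move=> nu0 Hf; elim=> [|x xs IH] [|k ks] pre Hh //.
- by rewrite /degsum big_nil expr0 mul1r scale1r.
- by case: Hh.
- by case: Hh.
have [hx Hh'] := homs_cons _ _ _ _ Hh.
have E : (size (rcons pre (f1 x)) + size xs = size pre + size (x :: xs))%N.
  by rewrite size_rcons /= addSnnS.
rewrite /= -cat_rcons -E (IH _ _ Hh') E cat_rcons (Hf _ _ hx) /= addnS ml_scale scalerA.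
congr (_ *: _); rewrite /degsum big_cons expfzDr // exprS -/(degsum ks); ring.
Qed.

End ML.

Section RS.
Variables (F : fieldType) (V : lmodType F).

Lemma rst_single (f mA : nat -> seq V -> V) n ks xs :
  (forall k ys, k != 1%N -> f k ys = 0) -> (0 < n)%N -> size xs = n ->
  rst_sum f mA n ks xs = f 1%N [:: mA n xs].
Proof.
move=> f0 n0 sz; rewrite /rst_sum.
case: n n0 sz => // n _ sz.
rewrite big_ord_recl [X in _ + X]big1 ?addr0; last first.
  move=> i _; apply: big1 => j _ /=; rewrite f0 ?scaler0 //.
  by rewrite /bump /= !addnS.
rewrite (big_ord_recr n) /= big1 ?add0r; last first.
  move=> i _; rewrite f0 ?scaler0 //= subn0 subSS add1n.
  by rewrite -lt0n subn_gt0 ltn_ord.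
rewrite mul0n subn0 subnn add0n take0 drop0 add0n -sz take_size drop_size /=.
rewrite /degsum big_nil mulr0 addr0 expr0z scale1r.
by rewrite take0.
Qed.

Lemma comps_sum fuel n c : c \in comps_fuel fuel n -> sumn c = n.
Proof.
elim: fuel n c => [|fuel IH] n c /=.
  by case: eqP => [->|_] //; rewrite inE => /eqP ->.
case: eqP => [->|_]; first by rewrite inE => /eqP ->.
case/flatten_mapP => i; rewrite mem_iota add0n => /andP [_ iln].
case/mapP => c' /IH e ->; by rewrite /= e subnKC.
Qed.

Lemma comps_count fuel n : (n <= fuel)%N ->
  count (pred1 (nseq n 1%N)) (comps_fuel fuel n) = 1%N.
Proof.
elim: fuel n => [|fuel IH] [|n] //= nf.
rewrite count_cat count_map subSS subn0.
rewrite (eq_count (a2 := pred1 (nseq n 1%N))); last first.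
  by move=> c /=; rewrite eqseq_cons eqxx.
rewrite IH //; apply/eqP; rewrite -[X in _ == X]addn0 eqn_add2l; apply/eqP.
apply/eqP; rewrite -leqn0 leqNgt -has_count; apply/hasPn => c.
case/flatten_mapP => i; rewrite mem_iota => /andP [i1 _] /mapP [c' _ ->] /=.
by rewrite eqseq_cons eqSS; case: i i1.
Qed.

Lemma size_tens (f : nat -> seq V -> V) bl xs : size (tens_apply f bl xs) = size bl.
Proof. by elim: bl xs => //= b bl IH xs; rewrite IH. Qed.

Lemma tens_zero (f : nat -> seq V -> V) bl xs b :
  (forall ys, f b ys = 0) -> b \in bl -> (0 : V) \in tens_apply f bl xs.
Proof.
move=> fb; elim: bl xs => //= b' bl IH xs; rewrite inE => /orP [/eqP <-|bbl].
  by rewrite fb mem_head.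
by rewrite inE IH ?orbT.
Qed.

Lemma tens_ones (f : nat -> seq V -> V) xs :
  tens_apply f (nseq (size xs) 1%N) xs = map (fun x => f 1%N [:: x]) xs.
Proof. by elim: xs => //= x xs <-; rewrite take0 drop0. Qed.

Lemma sigma_ones n : sigma_sign (nseq n 1%N) = 0.
Proof.
rewrite /sigma_sign big1 // => [[j hj]] _ /=; rewrite size_nseq in hj.
by rewrite nth_nseq hj subrr mulr0.
Qed.

Lemma koszul_ones n ks pre : koszul_exp (nseq n 1%N) ks pre = 0.
Proof. by elim: n ks pre => //= n IH ks pre; rewrite IH subrr mul0r addr0. Qed.

Lemma sum_single (T0 : eqType) (s : seq T0) (c0 : T0) (G : T0 -> V) :
  count (pred1 c0) s = 1%N -> {in s, forall c, c != c0 -> G c = 0} ->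
  \sum_(c <- s) G c = G c0.
Proof.
move=> cnt H.
transitivity (\sum_(c <- s | c == c0) G c0).
  rewrite [RHS]big_mkcond; apply: eq_big_seq => c cs /=.
  by case: eqP => [->//|ne]; apply: H => //; apply/eqP.
by rewrite big_const_seq cnt /= addr0.
Qed.
End RS.

Theorem corollary2p3 (F : fieldType) (V : lmodType F) (hom : int -> V -> Prop)
    (m : nat -> seq V -> V) (lambda : F) (a b : int) :
  graded hom -> Ainf_algebra hom m -> lambda != 0 ->
  let mt := fun (k : nat) (xs : seq V) => lambda ^ (a * k%:Z + b) *: m k xs in
  exists f : nat -> seq V -> V, Ainf_quasi_iso hom mt m f.
Proof.
move=> Hg [Hml Hgr Heq] l0 mt.
set nu := lambda ^ (- (a + b)).
set mu := lambda ^ (2 * a + b).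
have nu0 : nu != 0 by apply: expfz_neq0.
have mu0 : mu != 0 by apply: expfz_neq0.
pose TT := T F V hom.
pose Tn := TT (fun k => nu ^ k).
pose Ti := TT (fun k => nu^-1 ^ k).
pose f := fun (n : nat) (xs : seq V) => if n == 1%N then mu *: Tn (head 0 xs) else 0.
have f0 : forall k ys, k != 1%N -> f k ys = 0 by move=> k ys /negbTE; rewrite /f => ->.
have Thom : forall g k x, hom k x -> TT g x = g k *: x := T_hom _ _ _ Hg.
have Tlin : forall g c u w, TT g (c *: u + w) = c *: TT g u + TT g w := T_lin _ _ _ Hg.
pose D := fun x => m 1%N [:: x].
have Dl : forall c u w, D (c *: u + w) = c *: D u + D w := fun c u w => Hml [::] [::] c u w.
have Dh : forall k x, hom k x -> hom (k + 1) (D x).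
  move=> k x hx; have := Hgr 1%N [:: k] [:: x] isT erefl.
  rewrite /degsum big_seq1; apply; split=> // -[|i] //= _; exact: hx.
have TD : forall g v, TT g (D v) = D (TT (fun k => g (k + 1)) v) := fun g => T_D _ _ _ Hg g D Dl Dh.
have D0 : D 0 = 0 := ml_zero _ _ m Hml [::] [::].
have DZ : forall c v, D (c *: v) = c *: D v.
  by move=> c v; have := Dl c v 0; rewrite addr0 D0 addr0.
have T0 : forall g, TT g 0 = 0 := T_0 _ _ _ Hg.
have TZ : forall g c v, TT g (c *: v) = c *: TT g v.
  by move=> g c v; have := Tlin g c v 0; rewrite addr0 T0 addr0.
have TZi : forall c v, Ti (c *: v) = c *: Ti v := fun c v => TZ _ c v.
have TZn : forall c v, Tn (c *: v) = c *: Tn v := fun c v => TZ _ c v.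
have nui0 : nu^-1 != 0 by rewrite invr_eq0.
have TiTn : forall v, Ti (Tn v) = v.
  move=> v; rewrite /Ti /Tn /TT (T_comp _ _ _ Hg) -[RHS](T_one _ _ _ Hg v).
  apply: T_ext => k; rewrite exprz_inv -expfzDr // addNr expr0z //.
have TnTi : forall v, Tn (Ti v) = v.
  move=> v; rewrite /Ti /Tn /TT (T_comp _ _ _ Hg) -[RHS](T_one _ _ _ Hg v).
  apply: T_ext => k; rewrite exprz_inv -expfzDr // addrN expr0z //.
have TiD : forall v, Ti (D v) = nu^-1 *: D (Ti v).
  move=> v; rewrite /Ti TD -DZ; congr D; rewrite -(T_scal _ _ hom); apply: T_ext => k.
  by rewrite expfzDr // expr1z mulrC.
exists f; split; first split.
- move=> xs ys c u v; rewrite /f.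
  case E: (size xs + size ys)%N => [|n] /=; last by rewrite scaler0 addr0.
  move: E; case: xs => [|? ?] //; case: ys => [|? ?] //= _.
  by rewrite /Tn Tlin scalerDr !scalerA mulrC.
- move=> n ks xs n0 sz hh; rewrite /f; case: eqP => [n1|_]; last exact: (hom0 _ _ _ Hg).
  subst n; case: xs hh n1 n0 => [|x [|? ?]] // hh _ _.
  case: ks hh => [|k [|? ?]] [//= _ H] //.
  have hx : hom k x := H 0%N isT; rewrite /= /Tn (Thom _ _ _ hx) scalerA /degsum big_seq1 subrr addr0.
  exact: (homZ _ _ _ Hg _ _ _ hx).
- move=> n ks xs n0 sz hh.
  rewrite (rst_single _ _ f mt n ks xs f0 n0 sz).
  rewrite (sum_single _ _ _ _ (nseq n 1%N)); first last.
  + move=> c cin cne; have sc := comps_sum _ _ _ cin.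
    case: (boolP (all (pred1 1%N) c)) => [/all_pred1P Ha|/allPn [bb bc b1]].
      have E : c = nseq n 1%N by rewrite -sc Ha sumn_nseq mul1n.
      by rewrite E eqxx in cne.
    rewrite -(size_rev c) -(size_tens _ _ f (rev c) xs) (ml_zero_in _ _ m Hml) ?scaler0 //.
    apply: (tens_zero _ _ f _ _ bb); last by rewrite mem_rev.
    by move=> ys; apply: f0.
  + exact: comps_count.
  rewrite rev_nseq sigma_ones koszul_ones addr0 expr0z scale1r size_nseq.
  subst n; rewrite tens_ones /f /=.
  have Hf : forall k x, hom k x -> mu *: Tn x = (mu * nu ^ k) *: x.
    by move=> k x hx; rewrite /Tn (Thom _ _ _ hx) scalerA.
  have key := ml_key _ _ hom m Hml (fun x => mu *: Tn x) mu nu nu0 Hf xs ks [::] hh.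
  rewrite /= add0n in key; rewrite key.
  have hm := Hgr _ ks xs n0 erefl hh.
  rewrite /mt /Tn (Thom _ _ _ (homZ _ _ _ Hg _ (lambda ^ (a * (size xs)%:Z + b)) _ hm)) !scalerA.
  congr (_ *: _).
  rewrite /mu /nu exprnP !exprz_exp -!expfzDr //; congr (_ ^ _); ring.
rewrite /quasi_iso_on_H /=; split.
- move=> x _ [y]; rewrite /f /= => Hy.
  exists ((lambda ^ (a * 1%:Z + b))^-1 * mu^-1 * nu^-1 *: Ti y).
  have Ex : x = mu^-1 *: Ti (m 1%N [:: y]) by rewrite -Hy TZi TiTn scalerA mulVf // scale1r.
  rewrite {1}Ex -/(D y) TiD /mt -/(D _) DZ !scalerA; congr (_ *: _).
  by rewrite !mulrA mulfV ?mul1r // expfz_neq0.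
- move=> y Dy; exists (mu^-1 *: Ti y); split.
    have : Ti (D y) = 0 by rewrite /D Dy; apply: T0.
    rewrite TiD => /eqP; rewrite scaler_eq0 invr_eq0 (negbTE nu0) /= => /eqP E.
    rewrite /mt; change (m 1%N [:: mu^-1 *: Ti y]) with (D (mu^-1 *: Ti y)).
    by rewrite DZ E !scaler0.
  exists 0; rewrite /f /= TZn scalerA mulfV // scale1r TnTi subrr.
  by rewrite -/(D 0) D0.
Qed.
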